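(* Let $ABC$ be a hyperbolic triangle with sides $a=BC$, $b=CA$, $c=AB$ and angles $\alpha,\beta,\gamma$ at $A,B,C$ respectively, such that $\alpha>\pi/2$. Then $$\pi-\alpha<\beta+\gamma\cosh a.$$ *)

(* Defs.v *)
(* hyperbolic plane via the hyperboloid model in Minkowski R^{1,2}. *)
From Stdlib Require Import Reals.
Open Scope R_scope.

Record vec3 := V3 { v0 : R; v1 : R; v2 : R }.

Definition mink (x y : vec3) : R := - v0 x * v0 y + v1 x * v1 y + v2 x * v2 y.

Definition hpoint (x : vec3) : Prop := mink x x = -1 /\ 0 < v0 x.

Definition arcosh (t : R) : R := ln (t + sqrt (t * t - 1)).
Definition hdist (x y : vec3) : R := arcosh (- mink x y).

Definition vadd (x y : vec3) : vec3 := V3 (v0 x + v0 y) (v1 x + v1 y) (v2 x + v2 y).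
Definition vscale (k : R) (x : vec3) : vec3 := V3 (k * v0 x) (k * v1 x) (k * v2 x).

(* initial tangent vector at A of the geodesic from A towards B
   (orthogonal projection of B onto the tangent space at A) *)
Definition tangent_at (A B : vec3) : vec3 := vadd B (vscale (mink A B) A).

Definition hangle (A B C : vec3) : R :=
  let u := tangent_at A B in
  let v := tangent_at A C in
  acos (mink u v / (sqrt (mink u u) * sqrt (mink v v))).

Definition det3 (x y z : vec3) : R :=
  v0 x * (v1 y * v2 z - v2 y * v1 z)
  - v1 x * (v0 y * v2 z - v2 y * v0 z)
  + v2 x * (v0 y * v1 z - v1 y * v0 z).

(* a (nondegenerate) hyperbolic triangle: three points not on a common geodesic;
   geodesics are the intersections of the hyperboloid with planes through 0 *)
Definition htriangle (A B C : vec3) : Prop :=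
  hpoint A /\ hpoint B /\ hpoint C /\ det3 A B C <> 0.

(* Main.v *)
Require Import Defs.
From Stdlib Require Import Reals.
From Stdlib Require Import Lra Psatz.
Open Scope R_scope.

Lemma mink_sym x y : mink x y = mink y x.
Proof. unfold mink; ring. Qed.

Lemma mink_tan P Q R : mink (tangent_at P Q) (tangent_at P R) =
  mink Q R + mink P Q * mink P R * (2 + mink P P).
Proof. destruct P, Q, R; unfold tangent_at, vadd, vscale, mink; simpl; ring. Qed.

Lemma gram A B C :
  let aa := mink A A in let bb := mink B B in let cc := mink C C in
  let ab := mink A B in let ac := mink A C in let bc := mink B C in
  aa * (bb * cc - bc * bc) - ab * (ab * cc - bc * ac) + ac * (ab * bc - bb * ac)
  = - (det3 A B C * det3 A B C).
Proof. destruct A, B, C; unfold mink, det3; simpl; ring. Qed.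

Lemma revCS P Q : hpoint P -> hpoint Q -> 1 <= - mink P Q.
Proof.
  destruct P as [p0 p1 p2], Q as [q0 q1 q2]; unfold hpoint, mink; simpl.
  intros [HP HP0] [HQ HQ0].
  assert (H : (1 + (p1*q1 + p2*q2)) * (1 + (p1*q1 + p2*q2)) <= (p0*q0)*(p0*q0)).
  { assert (Ep : p0*p0 = 1 + p1*p1 + p2*p2) by lra.
    assert (Eq : q0*q0 = 1 + q1*q1 + q2*q2) by lra.
    replace ((p0*q0)*(p0*q0)) with ((p0*p0)*(q0*q0)) by ring.
    rewrite Ep, Eq. assert (0 <= (p1-q1)*(p1-q1) + (p2-q2)*(p2-q2) + (p1*q2-p2*q1)*(p1*q2-p2*q1)) by (apply Rplus_le_le_0_compat; [apply Rplus_le_le_0_compat|]; apply Rle_0_sqr). unfold Rsqr in *. nra. }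
  assert (0 < p0 * q0) by nra.
  nra.
Qed.

Lemma cosh_hdist B C : 1 <= - mink B C -> cosh (hdist B C) = - mink B C.
Proof.
  intros H. unfold hdist, arcosh, cosh. set (X := - mink B C) in *.
  assert (Hs : 0 <= X * X - 1) by nra.
  assert (Hss := sqrt_sqrt _ Hs).
  assert (Hs0 := sqrt_pos (X*X-1)).
  assert (Hw : 0 < X + sqrt (X * X - 1)) by lra.
  rewrite exp_Ropp, exp_ln by exact Hw.
  assert (Hinv : / (X + sqrt (X*X-1)) = X - sqrt (X*X-1)).
  { apply Rmult_eq_reg_l with (r := X + sqrt (X*X-1)); [|lra].
    rewrite Rinv_r by lra. nra. }
  rewrite Hinv. lra.
Qed.

Lemma hangle_eq P Q R : hpoint P -> hpoint Q -> hpoint R ->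
  hangle P Q R = acos (((- mink P Q) * (- mink P R) - (- mink Q R)) /
     (sqrt ((- mink P Q) * (- mink P Q) - 1) * sqrt ((- mink P R) * (- mink P R) - 1))).
Proof.
  intros [HP _] [HQ _] [HR _]. unfold hangle.
  rewrite !mink_tan, HP, HQ, HR. f_equal. f_equal; [ring|]. f_equal; f_equal; ring.
Qed.

Definition DD (p q r : R) := 1 + 2 * p * q * r - p * p - q * q - r * r.

Lemma angle_facts p q r : 1 < p -> 1 < q -> 1 < r -> 0 < DD p q r ->
  let v := (q * r - p) / (sqrt (q * q - 1) * sqrt (r * r - 1)) in
  0 < acos v < PI /\ cos (acos v) = v /\
  sin (acos v) = sqrt (DD p q r) / (sqrt (q * q - 1) * sqrt (r * r - 1)).
Proof.
  intros Hp Hq Hr HD v.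
  assert (Hq1 : 0 < q * q - 1) by nra. assert (Hr1 : 0 < r * r - 1) by nra.
  set (sq := sqrt (q*q-1)) in *. set (sr := sqrt (r*r-1)) in *.
  assert (Hsq : sq * sq = q*q-1) by (apply sqrt_sqrt; lra).
  assert (Hsr : sr * sr = r*r-1) by (apply sqrt_sqrt; lra).
  assert (Hsq0 : 0 < sq) by (apply sqrt_lt_R0; lra).
  assert (Hsr0 : 0 < sr) by (apply sqrt_lt_R0; lra).
  assert (Hm : 0 < sq * sr) by nra.
  assert (Hv : v * (sq * sr) = q * r - p) by (unfold v; field; lra).
  assert (Hden : (sq*sr)*(sq*sr) - (q*r-p)*(q*r-p) = DD p q r).
  { replace ((sq*sr)*(sq*sr)) with ((sq*sq)*(sr*sr)) by ring. rewrite Hsq, Hsr. unfold DD. ring. }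
  assert (Hv2 : v * v < 1).
  { assert ((v*v) * ((sq*sr)*(sq*sr)) < 1 * ((sq*sr)*(sq*sr))).
    { replace ((v*v) * ((sq*sr)*(sq*sr))) with ((v*(sq*sr))*(v*(sq*sr))) by ring. rewrite Hv. lra. }
    apply Rmult_lt_reg_r with ((sq*sr)*(sq*sr)); nra. }
  assert (Hvb : -1 < v < 1) by nra.
  assert (Hc : cos (acos v) = v) by (apply cos_acos; lra).
  assert (Hb := acos_bound v).
  split; [|split; [exact Hc|]].
  - split.
    + destruct (Rle_lt_or_eq_dec 0 (acos v) (proj1 Hb)) as [h|h]; [exact h|].
      rewrite <- h, cos_0 in Hc. lra.
    + destruct (Rle_lt_or_eq_dec (acos v) PI (proj2 Hb)) as [h|h]; [exact h|].
      rewrite h, cos_PI in Hc. lra.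
  - rewrite sin_acos by lra. apply sqrt_lem_1.
    + unfold Rsqr; nra.
    + apply Rmult_le_pos; [apply sqrt_pos|]. left; apply Rinv_0_lt_compat; exact Hm.
    + assert (HDs : sqrt (DD p q r) * sqrt (DD p q r) = DD p q r) by (apply sqrt_sqrt; lra).
      unfold Rsqr. 
      apply Rmult_eq_reg_r with ((sq*sr)*(sq*sr)); [|nra].
      replace (sqrt (DD p q r) / (sq * sr) * (sqrt (DD p q r) / (sq * sr)) * (sq * sr * (sq * sr)))
        with (sqrt (DD p q r) * sqrt (DD p q r)) by (field; lra).
      replace ((1 - v * v) * (sq * sr * (sq * sr))) with ((sq * sr * (sq * sr)) - (v*(sq*sr))*(v*(sq*sr))) by ring.
      rewrite Hv, HDs. lra.
Qed.

Lemma law_alg X Y Z sX sY sZ sD : 0 < sX -> 0 < sY -> 0 < sZ ->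
  sX * sX = X * X - 1 -> sD * sD = DD X Y Z ->
  (Z*Y - X)/(sZ*sY) = - ((X*Z - Y)/(sX*sZ)) * ((Y*X - Z)/(sY*sX)) + sD/(sX*sZ) * (sD/(sY*sX)) * X.
Proof.
  intros HX HY HZ EX ED.
  replace (- ((X*Z - Y)/(sX*sZ)) * ((Y*X - Z)/(sY*sX)) + sD/(sX*sZ) * (sD/(sY*sX)) * X)
    with ((- (X*Z - Y) * (Y*X - Z) + (sD*sD) * X) / ((sX*sX)*sY*sZ)) by (field; lra).
  rewrite ED, EX. unfold DD.
  replace (- (X * Z - Y) * (Y * X - Z) + (1 + 2 * X * Y * Z - X * X - Y * Y - Z * Z) * X)
    with ((X*X-1) * (Z*Y - X)) by ring.
  assert (X*X-1 <> 0) by (rewrite <- EX; nra).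
  field. repeat split; lra.
Qed.
Lemma key (al be ga c : R) : 0 < al < PI -> 0 < be < PI -> 0 < ga < PI ->
  PI / 2 < al -> 1 < c -> cos al = - cos be * cos ga + sin be * sin ga * c ->
  PI - al < be + ga * c.
Proof.
  intros Hal Hbe Hga Hal2 Hc Hlaw.
  set (x := PI - al).
  assert (Hcx : cos x = - cos al) by (unfold x; apply Rtrigo_facts.cos_pi_minus).
  assert (Hgc : 0 < ga * c) by nra.
  destruct (Rle_or_lt x be) as [Hle|Hlt]; [lra|].
  assert (Hsb : 0 < sin be) by (apply sin_gt_0; lra).
  assert (Hsg : 0 < sin ga) by (apply sin_gt_0; lra).
  set (u := be + ga).
  assert (Hcu : cos u = cos be * cos ga - sin be * sin ga) by (unfold u; apply cos_plus).
  assert (Hdiff : cos u - cos x = sin be * sin ga * (c - 1)) by nra.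
  assert (Hpos : 0 < sin be * sin ga * (c - 1)) by (apply Rmult_lt_0_compat; nra).
  assert (Hux : u < x).
  { destruct (Rlt_or_le u x) as [h|h]; [exact h|exfalso].
    destruct (Rle_or_lt u PI) as [h2|h2].
    - destruct (Rle_lt_or_eq_dec x u h) as [h3|h3].
      + assert (cos u < cos x) by (apply cos_decreasing_1; unfold x, u in *; lra). lra.
      + rewrite h3 in Hdiff. lra.
    - assert (cos u < 0) by (apply cos_lt_0; unfold x, u in *; lra).
      assert (0 < cos x) by (apply cos_gt_0; unfold x in *; lra). lra. }
  destruct (MVT_cor2 cos (fun t => - sin t) u x Hux (fun t _ => derivable_pt_lim_cos t))
    as [xi [Hxi1 Hxi2]].
  assert (Hsxi : sin be < sin xi).
  { apply sin_increasing_1; unfold x, u in *; lra. }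
  assert (H1 : sin be * (x - u) <= sin be * sin ga * (c - 1)).
  { assert (0 <= (sin xi - sin be) * (x - u)) by (apply Rmult_le_pos; lra). nra. }
  assert (H2 : x - u <= sin ga * (c - 1)).
  { apply (Rmult_le_reg_l (sin be)); [exact Hsb| nra]. }
  assert (H3 : sin ga < ga) by (apply sin_lt_x; lra).
  assert (sin ga * (c-1) < ga * (c-1)) by nra.
  unfold x, u in *. lra.
Qed.

Theorem lemma5p2p5 (A B C : vec3) :
  htriangle A B C ->
  hangle A B C > PI / 2 ->
  PI - hangle A B C < hangle B C A + hangle C A B * cosh (hdist B C).
Proof.
  intros [hA [hB [hC Hdet]]] Hobt.
  assert (HX := revCS B C hB hC). assert (HY := revCS A C hA hC). assert (HZ := revCS A B hA hB).
  rewrite (cosh_hdist B C HX).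
  rewrite (hangle_eq A B C hA hB hC).
  rewrite (hangle_eq A B C hA hB hC) in Hobt.
  rewrite (hangle_eq B C A hB hC hA), (hangle_eq C A B hC hA hB).
  rewrite (mink_sym B A), (mink_sym C A), (mink_sym C B).
  set (X := - mink B C) in *. set (Y := - mink A C) in *. set (Z := - mink A B) in *.
  assert (HD : DD X Y Z = det3 A B C * det3 A B C).
  { pose proof (gram A B C) as G. simpl in G.
    destruct hA as [EA _], hB as [EB _], hC as [EC _].
    rewrite EA, EB, EC in G. unfold DD, X, Y, Z.
    rewrite (mink_sym A B) in *. lra. }
  assert (HD0 : 0 < DD X Y Z).
  { rewrite HD. assert (det3 A B C * det3 A B C > 0) by (apply Rsqr_pos_lt in Hdet; unfold Rsqr in Hdet; lra). lra. }
  clearbody X Y Z.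
  assert (HX1 : 1 < X).
  { destruct (Rle_lt_or_eq_dec 1 X HX) as [h|h]; [exact h|].
    exfalso. rewrite <- h in HD0. unfold DD in HD0. clear -HD0. match type of HD0 with 0 < ?e => assert (E : e = - ((Y-Z)*(Y-Z))) by ring end. pose proof (Rle_0_sqr (Y-Z)). unfold Rsqr in *. lra. }
  assert (HY1 : 1 < Y).
  { destruct (Rle_lt_or_eq_dec 1 Y HY) as [h|h]; [exact h|].
    exfalso. rewrite <- h in HD0. unfold DD in HD0. clear -HD0. match type of HD0 with 0 < ?e => assert (E : e = - ((X-Z)*(X-Z))) by ring end. pose proof (Rle_0_sqr (X-Z)). unfold Rsqr in *. lra. }
  assert (HZ1 : 1 < Z).
  { destruct (Rle_lt_or_eq_dec 1 Z HZ) as [h|h]; [exact h|].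
    exfalso. rewrite <- h in HD0. unfold DD in HD0. clear -HD0. match type of HD0 with 0 < ?e => assert (E : e = - ((X-Y)*(X-Y))) by ring end. pose proof (Rle_0_sqr (X-Y)). unfold Rsqr in *. lra. }
  assert (Da : DD X Z Y = DD X Y Z) by (unfold DD; ring).
  assert (Db : DD Y X Z = DD X Y Z) by (unfold DD; ring).
  assert (Dc : DD Z Y X = DD X Y Z) by (unfold DD; ring).
  destruct (angle_facts X Z Y HX1 HZ1 HY1 ltac:(rewrite Da; exact HD0)) as [Ba [Ca Sa]].
  destruct (angle_facts Y X Z HY1 HX1 HZ1 ltac:(rewrite Db; exact HD0)) as [Bb [Cb Sb]].
  destruct (angle_facts Z Y X HZ1 HY1 HX1 ltac:(rewrite Dc; exact HD0)) as [Bc [Cc Sc]].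
  rewrite Da in Sa. rewrite Db in Sb. rewrite Dc in Sc.
  apply key; try assumption; try lra.
  rewrite Ca, Cb, Cc, Sb, Sc.
  apply law_alg.
  - apply sqrt_lt_R0; nra.
  - apply sqrt_lt_R0; nra.
  - apply sqrt_lt_R0; nra.
  - apply sqrt_sqrt; nra.
  - apply sqrt_sqrt; lra.
Qed.
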